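(* Let $q$ be a prime power and $M\geq 2$ an integer. Let $g\in\mathbb{F}_q[x]$ be a monic irreducible polynomial with $g(0)\neq 0$ and $g\neq g^*$ (so that $f=gg^*$ is a type $2$ polynomial). Then every irreducible factor $h$ of $g(x^M)$ is of type $2$, i.e. satisfies $h\neq h^*$ (it is not self-reciprocal).
   Context: For a monic polynomial $f\in\mathbb{F}_q[x]$ of degree $r$ with $f(0)\neq0$, its dual is $f^*(x)=f(0)^{-1}x^rf(x^{-1})$, and $f$ is self-reciprocal if $f=f^*$. A type $2$ polynomial is one of the form $gg^*$ with $g$ irreducible and $g\neq g^*$. *)

(* Defs.v *)
From HB Require Import structures.
From mathcomp Require Import all_boot all_order all_algebra all_field.
Set Implicit Arguments. Unset Strict Implicit. Unset Printing Implicit Defensive.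
Import GRing.Theory.
Local Open Scope ring_scope.

(* The dual f^* = f(0)^{-1} x^r f(x^{-1}) of a polynomial f of degree r:
   x^r f(x^{-1}) is the coefficient reversal sum_{i<=r} f_{r-i} x^i. *)
Definition dual_poly (F : fieldType) (f : {poly F}) : {poly F} :=
  (f`_0)^-1 *: \poly_(i < size f) f`_((size f).-1 - i).

Definition self_reciprocal (F : fieldType) (f : {poly F}) : Prop :=
  f = dual_poly f.

(* Main.v *)
Require Import Defs.
From HB Require Import structures.
From mathcomp Require Import all_boot all_order all_algebra all_field.
From mathcomp Require Import zify.
Local Open Scope ring_scope.
Import GRing.Theory.

Section Rev.
Variable F : fieldType.
Implicit Types p q : {poly F}.

Definition Rv (d : nat) p : {poly F} := \poly_(i < d.+1) p`_(d - i).

Lemma RvD d p q : Rv d (p + q) = Rv d p + Rv d q.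
Proof. by apply/polyP => i; rewrite !coefE; case: ifP; rewrite ?addr0. Qed.

Lemma RvZ d c p : Rv d (c *: p) = c *: Rv d p.
Proof. by apply/polyP => i; rewrite !coefE; case: ifP; rewrite ?mulr0. Qed.

Lemma Rv0 d : Rv d 0 = 0.
Proof. by apply/polyP => i; rewrite !coefE; case: ifP. Qed.

Lemma Rvsum d n (E : 'I_n -> {poly F}) :
  Rv d (\sum_(i < n) E i) = \sum_(i < n) Rv d (E i).
Proof. exact: (big_morph _ (RvD d) (Rv0 d)). Qed.

Lemma RvXn d k : (k <= d)%N -> Rv d 'X^k = 'X^(d - k).
Proof.
move=> kd; apply/polyP => i; rewrite !coefE.
case: ltnP => hi.
  by have -> : ((d - i == k) = (i == d - k))%N by apply/eqP/eqP; lia.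
by have -> : ((i == d - k) = false)%N by apply/eqP; lia.
Qed.

Lemma expand p n : (size p <= n)%N -> p = \sum_(i < n) p`_i *: 'X^i.
Proof.
move=> sp; rewrite -poly_def; apply/polyP => i; rewrite coef_poly.
by case: ltnP => // h; rewrite nth_default // (leq_trans sp h).
Qed.

Lemma RvE d p : (size p <= d.+1)%N -> Rv d p = \sum_(i < d.+1) p`_i *: 'X^(d - i).
Proof.
move=> sp; rewrite {1}(expand _ _ sp) Rvsum; apply: eq_bigr => i _.
by rewrite RvZ RvXn // -ltnS.
Qed.

Lemma RvM a b p q : (size p <= a.+1)%N -> (size q <= b.+1)%N ->
  Rv (a + b) (p * q) = Rv a p * Rv b q.
Proof.
move=> sp sq.
have E : p * q = \sum_(i < a.+1) \sum_(j < b.+1) (p`_i * q`_j) *: 'X^(i + j).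
  rewrite {1}(expand _ _ sp) {1}(expand _ _ sq) mulr_suml; apply: eq_bigr => i _.
  rewrite mulr_sumr; apply: eq_bigr => j _.
  by rewrite -scalerAl -scalerAr scalerA -exprD.
rewrite E (RvE _ _ sp) (RvE _ _ sq) Rvsum mulr_suml; apply: eq_bigr => i _.
rewrite Rvsum mulr_sumr; apply: eq_bigr => j _.
have := ltn_ord i; have := ltn_ord j => hj hi.
rewrite RvZ RvXn; last by lia.
rewrite -scalerAl -scalerAr scalerA -exprD; congr (_ *: 'X^_); lia.
Qed.

Lemma dualE p : p != 0 -> dual_poly p = (p`_0)^-1 *: Rv (size p).-1 p.
Proof. by move=> pn0; rewrite /dual_poly /Rv prednK // size_poly_gt0. Qed.

Lemma dualM p q : p`_0 != 0 -> q`_0 != 0 ->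
  dual_poly (p * q) = dual_poly p * dual_poly q.
Proof.
move=> p0 q0.
have pn0 : p != 0 by apply: contraNneq p0 => ->; rewrite coef0.
have qn0 : q != 0 by apply: contraNneq q0 => ->; rewrite coef0.
have pqn0 : p * q != 0 by rewrite mulf_neq0.
rewrite !dualE //.
have sp := size_poly_gt0 p; have sq := size_poly_gt0 q.
rewrite pn0 in sp; rewrite qn0 in sq.
have -> : (size (p * q)).-1 = ((size p).-1 + (size q).-1)%N.
  by rewrite size_mul // -(prednK sp) -(prednK sq) addSn addnS.
rewrite RvM ?leqSpred // coef0M invfM -scalerA scalerAl scalerAr.
by rewrite -!scalerAl -!scalerAr !scalerA mulrC.
Qed.

Lemma RvComp d M p : (0 < M)%N -> (size p <= d.+1)%N ->
  Rv (d * M) (p \Po 'X^M) = Rv d p \Po 'X^M.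
Proof.
move=> M0 sp; apply/polyP => i.
rewrite coef_comp_poly_Xn // !coef_poly coef_comp_poly_Xn //.
case: ltnP => hi.
  rewrite dvdn_subr ?dvdn_mull //.
  case: ifP => // /dvdnP [t ht]; subst i; rewrite mulnK //.
  have td : (t <= d)%N by rewrite -(leq_pmul2r M0) -ltnS.
  by rewrite ltnS td -mulnBl mulnK.
case: ifP => // /dvdnP [t ht]; rewrite ht mulnK //.
have -> : (t < d.+1)%N = false.
  by apply/negbTE; rewrite -leqNgt -(ltn_pmul2r M0) -ht.
by [].
Qed.

End Rev.
Arguments Rv {F}.

Theorem lemma4p18 (F : finFieldType) (M : nat) (g : {poly F}) :
  (2 <= M)%N ->
  g \is monic -> irreducible_poly g -> g`_0 != 0 -> g <> dual_poly g ->
  forall h : {poly F},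
    h \is monic -> irreducible_poly h -> h %| (g \Po 'X^M) ->
    h <> dual_poly h.
Proof.
move=> hM gm girr g0 gnd h hm hirr hdvd hself.
have M0 : (0 < M)%N by lia.
set G := g \Po 'X^M.
have G0 : G`_0 = g`_0 by rewrite /G coef_comp_poly_Xn // dvdn0 div0n.
have gn0 : g != 0 by apply: contraNneq g0 => ->; rewrite coef0.
have Gn0 : G != 0 by apply: contraNneq g0 => E; rewrite -G0 E coef0.
have [k Ek] := dvdpP _ _ hdvd.
have [k0 h0] : k`_0 != 0 /\ h`_0 != 0.
  by move: g0; rewrite -G0 /G Ek coef0M mulf_eq0 negb_or => /andP.
have dG : dual_poly G = dual_poly k * h by rewrite /G Ek dualM // -hself.
have sg := size_poly_gt0 g; rewrite gn0 in sg.
have sXM : size ('X^M : {poly F}) = M.+1 by rewrite size_polyXn.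
have sG : (size G).-1 = ((size g).-1 * M)%N.
  by rewrite /G size_comp_poly sXM.
have dGc : dual_poly G = dual_poly g \Po 'X^M.
  rewrite dualE // dualE // sG G0 RvComp ?prednK // comp_polyZ //.
have h1 : h %| dual_poly g \Po 'X^M by rewrite -dGc dG dvdp_mull.
have sRg : size (Rv (size g).-1 g) = size g.
  rewrite /Rv size_poly_eq prednK // subnn //.
have sdg : size (dual_poly g) = size g.
  by rewrite dualE // size_scale ?sRg // invr_eq0.
have mdg : dual_poly g \is monic.
  rewrite dualE // monicE lead_coefZ /lead_coef sRg /Rv coef_poly prednK //.
  by rewrite leqnn subnn mulVf.
have cop : coprimep g (dual_poly g).
  rewrite irreducible_poly_coprime //; apply/negP => gd; apply: gnd.
  by apply/eqP; rewrite -eqp_monic // -(dvdp_size_eqp gd) sdg.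
have [[u v] /= Huv] := Bezout_coprimepP _ _ cop.
set P := u * g + v * dual_poly g in Huv.
have hP : h %| P \Po 'X^M.
  rewrite /P comp_polyD !comp_polyM.
  by rewrite dvdp_add // dvdp_mull.
have sP : size P = 1%N by rewrite (eqp_size Huv) size_poly1.
have sPc : size (P \Po 'X^M) = 1%N.
  have : (size (P \Po 'X^M)).-1 = 0%N by rewrite size_comp_poly sP.
  have : P \Po 'X^M != 0.
    by rewrite comp_poly_eq0 ?sXM ?ltnS // -size_poly_gt0 sP.
  rewrite -size_poly_gt0; case: (size _) => // n _ /= ->; done.
have := dvdp_leq _ hP; rewrite sPc.
have : P \Po 'X^M != 0 by rewrite -size_poly_gt0 sPc.
move=> nz /(_ nz); have s1 := hirr.1.
by rewrite leqNgt s1.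
Qed.
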